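(* Let $\omega=e^{2\pi i/3}$ and consider the six three-qubit states $$\tfrac{1}{\sqrt3}(|001\rangle+|010\rangle+|100\rangle),\ \tfrac{1}{\sqrt3}(|001\rangle+\omega|010\rangle+\omega^2|100\rangle),\ \tfrac{1}{\sqrt3}(|001\rangle+\omega^2|010\rangle+\omega|100\rangle),$$ $$\tfrac{1}{\sqrt3}(|000\rangle+|101\rangle+|110\rangle),\ \tfrac{1}{\sqrt3}(|000\rangle+\omega|101\rangle+\omega^2|110\rangle),\ \tfrac{1}{\sqrt3}(|000\rangle+\omega^2|101\rangle+\omega|110\rangle).$$ These states are mutually orthogonal, each is genuinely entangled and belongs to the W-class, and they form an unextendible entangled basis of $\mathbb{C}^2\otimes\mathbb{C}^2\otimes\mathbb{C}^2$. Moreover, the unextendibility is conserved across every bipartition: for each bipartition $A|BC$, $B|AC$, $C|AB$, the orthogonal complement of their span contains no pure state that is entangled with respect to that bipartition.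
   Context: $|v_1v_2v_3\rangle$ denotes $|v_1\rangle\otimes|v_2\rangle\otimes|v_3\rangle$ in the computational basis. A pure three-qubit state is genuinely entangled if it is not a product state across any bipartition. The W-class is the set of three-qubit pure states that can be obtained from $|W\rangle=\tfrac{1}{\sqrt3}(|001\rangle+|010\rangle+|100\rangle)$ by stochastic LOCC (SLOCC), i.e. by invertible local operators $A\otimes B\otimes C$ up to normalization. An unextendible entangled basis is a set of mutually orthogonal pure entangled states spanning a proper subspace whose orthogonal complement contains no entangled state. *)

(* Defs.v *)
From HB Require Import structures.
From mathcomp Require Import all_boot all_order all_algebra all_field.
Set Implicit Arguments. Unset Strict Implicit. Unset Printing Implicit Defensive.
Import Order.TTheory GRing.Theory Num.Theory.
Local Open Scope ring_scope.

(* A (not necessarily normalized) vector of C^2 (x) C^2 (x) C^2, given by its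
   coordinates psi i j k = <ijk|psi> in the computational basis. *)
Definition qstate := 'I_2 -> 'I_2 -> 'I_2 -> algC.

Definition ket (a b c : nat) : qstate :=
  fun x y z => ((x == a :> nat) && (y == b :> nat) && (z == c :> nat))%:R.

Definition inner (u v : qstate) : algC :=
  \sum_(i < 2) \sum_(j < 2) \sum_(k < 2) (u i j k)^* * v i j k.

Definition nonzero_state (v : qstate) : Prop := exists i j k, v i j k != 0.

Definition fully_product (v : qstate) : Prop :=
  exists a b c : 'I_2 -> algC, forall i j k, v i j k = a i * b j * c k.

Definition product_A_BC (v : qstate) : Prop :=
  exists (a : 'I_2 -> algC) (p : 'I_2 -> 'I_2 -> algC),
    forall i j k, v i j k = a i * p j k.
Definition product_B_AC (v : qstate) : Prop :=
  exists (b : 'I_2 -> algC) (p : 'I_2 -> 'I_2 -> algC),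
    forall i j k, v i j k = b j * p i k.
Definition product_C_AB (v : qstate) : Prop :=
  exists (c : 'I_2 -> algC) (p : 'I_2 -> 'I_2 -> algC),
    forall i j k, v i j k = c k * p i j.

Definition entangled (v : qstate) : Prop :=
  nonzero_state v /\ ~ fully_product v.

Definition genuinely_entangled (v : qstate) : Prop :=
  [/\ nonzero_state v, ~ product_A_BC v, ~ product_B_AC v & ~ product_C_AB v].

Definition local_op (A B C : 'M[algC]_2) (v : qstate) : qstate :=
  fun i j k => \sum_(i' < 2) \sum_(j' < 2) \sum_(k' < 2)
                 A i i' * B j j' * C k k' * v i' j' k'.

Definition s3 : algC := (sqrtC 3)^-1.

Definition W_state : qstate :=
  fun x y z => s3 * (ket 0 0 1 x y z + ket 0 1 0 x y z + ket 1 0 0 x y z).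

(* SLOCC orbit of |W>, up to normalization *)
Definition W_class (v : qstate) : Prop :=
  exists (A B C : 'M[algC]_2) (c : algC),
    [/\ A \in unitmx, B \in unitmx, C \in unitmx, c != 0 &
        forall i j k, v i j k = c * local_op A B C W_state i j k].

Definition in_complement n (S : 'I_n -> qstate) (v : qstate) : Prop :=
  forall l, inner (S l) v = 0.

(* Unextendible entangled basis: mutually orthogonal (normalized) pure entangled
   states spanning a proper subspace (equivalently: the orthogonal complement
   contains a nonzero vector) whose orthogonal complement contains no
   entangled state. *)
Definition unextendible_entangled_basis n (S : 'I_n -> qstate) : Prop :=
  [/\ forall l, inner (S l) (S l) = 1,
      forall l m, l != m -> inner (S l) (S m) = 0,
      forall l, entangled (S l),
      exists v, nonzero_state v /\ in_complement S v
    & forall v, in_complement S v -> ~ entangled v].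

Definition omega : algC := (-1 + 'i * sqrtC 3) / 2.

Definition Wtype (c1 c2 c3 : algC) : qstate :=
  fun x y z => s3 * (c1 * ket 0 0 1 x y z + c2 * ket 0 1 0 x y z
                     + c3 * ket 1 0 0 x y z).
Definition Wtype' (c1 c2 c3 : algC) : qstate :=
  fun x y z => s3 * (c1 * ket 0 0 0 x y z + c2 * ket 1 0 1 x y z
                     + c3 * ket 1 1 0 x y z).

Definition six_states (l : 'I_6) : qstate :=
  match val l with
  | 0 => Wtype 1 1 1
  | 1 => Wtype 1 omega (omega ^+ 2)
  | 2 => Wtype 1 (omega ^+ 2) omega
  | 3 => Wtype' 1 1 1
  | 4 => Wtype' 1 omega (omega ^+ 2)
  | _ => Wtype' 1 (omega ^+ 2) omega
  end.

(* Main.v *)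
Require Import Defs.
From mathcomp Require Import all_boot all_order all_algebra all_field.
From mathcomp Require Import ring.
Import GRing.Theory Num.Theory.
Local Open Scope ring_scope.

Definition i0 : 'I_2 := @Ordinal 2 0 isT.
Definition i1 : 'I_2 := @Ordinal 2 1 isT.

Lemma I2P (i : 'I_2) : i = i0 \/ i = i1.
Proof. case: i => [[|[|n]] H]; [left|right|by []]; exact: val_inj. Qed.

Lemma sum2 (f : 'I_2 -> algC) : \sum_(i < 2) f i = f i0 + f i1.
Proof. by rewrite big_ord_recr big_ord1 /=; congr (f _ + f _); apply: val_inj. Qed.

Lemma inner_exp u v : inner u v =
  (u i0 i0 i0)^* * v i0 i0 i0 + (u i0 i0 i1)^* * v i0 i0 i1 +
  (u i0 i1 i0)^* * v i0 i1 i0 + (u i0 i1 i1)^* * v i0 i1 i1 +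
  (u i1 i0 i0)^* * v i1 i0 i0 + (u i1 i0 i1)^* * v i1 i0 i1 +
  (u i1 i1 i0)^* * v i1 i1 i0 + (u i1 i1 i1)^* * v i1 i1 i1.
Proof. rewrite /inner !sum2; ring. Qed.

Ltac kev := rewrite /= ?mulr1n ?mulr0n ?mulr0 ?mulr1 ?mul0r ?mul1r ?addr0 ?add0r ?mulr0 ?mul0r ?addr0 ?add0r.

Lemma inner_Wt c1 c2 c3 v : inner (Wtype c1 c2 c3) v =
  s3^* * (c1^* * v i0 i0 i1 + c2^* * v i0 i1 i0 + c3^* * v i1 i0 i0).
Proof.
rewrite inner_exp /Wtype /ket; kev; rewrite ?conjC0 ?rmorphM /=; ring.
Qed.

Lemma inner_Wt' c1 c2 c3 v : inner (Wtype' c1 c2 c3) v =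
  s3^* * (c1^* * v i0 i0 i0 + c2^* * v i1 i0 i1 + c3^* * v i1 i1 i0).
Proof.
rewrite inner_exp /Wtype' /ket; kev; rewrite ?conjC0 ?rmorphM /=; ring.
Qed.

Lemma n0 (n : nat) : (n.+1)%:R != 0 :> algC.
Proof. by rewrite pnatr_eq0. Qed.

Definition tt_ : algC := 'i * sqrtC 3.
Lemma sq3c : (sqrtC 3 : algC)^* = sqrtC 3.
Proof. by apply: conj_Creal; apply: sqrtC_real. Qed.
Lemma tt2 : tt_ ^+ 2 = - 3.
Proof. by rewrite /tt_ exprMn sqrCi sqrtCK mulN1r. Qed.
Lemma ttc : tt_^* = - tt_.
Proof. by rewrite /tt_ rmorphM /= conjCi sq3c mulNr. Qed.

Lemma om_c : omega^* = omega ^+ 2.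
Proof.
have ->: omega ^+ 2 = (-1 - tt_)/2 + (tt_ ^+ 2 + 3) / 4.
  by rewrite /omega -/tt_; field.
rewrite tt2 addNr mul0r addr0 /omega -/tt_ rmorphM rmorphD rmorphN rmorph1 /=.
by rewrite fmorphV rmorph_nat ttc.
Qed.

Lemma om_S : 1 + omega + omega ^+ 2 = 0.
Proof.
have ->: 1 + omega + omega ^+ 2 = (tt_ ^+ 2 + 3) / 4.
  by rewrite /omega -/tt_; field.
by rewrite tt2 addNr mul0r.
Qed.

Lemma om3 : omega ^+ 3 = 1.
Proof.
have ->: omega ^+ 3 = 1 + (omega - 1) * (1 + omega + omega ^+ 2) by ring.
by rewrite om_S mulr0 addr0.
Qed.

Lemma om2c : (omega ^+ 2)^* = omega.
Proof.
rewrite rmorphXn /= om_c -exprM.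
have ->: omega ^+ (2 * 2) = omega ^+ 3 * omega by rewrite -exprSr.
by rewrite om3 mul1r.
Qed.

Lemma om_n0 : omega != 0.
Proof. by apply/eqP => h; have := om3; rewrite h expr0n /= => /eqP; rewrite eq_sym oner_eq0. Qed.

Lemma s3c : s3^* = s3.
Proof. by rewrite /s3 fmorphV /= sq3c. Qed.
Lemma s3n0 : s3 != 0.
Proof. by rewrite /s3 invr_eq0 sqrtC_eq0 n0. Qed.
Lemma s3s3 : s3 * s3 * 3 = 1.
Proof. rewrite /s3 -invfM -expr2 sqrtCK mulVf //; exact: n0. Qed.
Lemma om2 : omega ^+ 2 = - omega - 1.
Proof. by apply/eqP; rewrite -subr_eq0 -om_S; apply/eqP; ring. Qed.

Ltac wsimp := rewrite ?inner_Wt ?inner_Wt' /Wtype /Wtype' /ket; kev;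
  rewrite ?s3c ?conjC1 ?om_c ?om2c.

Lemma orth (l m : 'I_6) : l != m -> inner (six_states l) (six_states m) = 0.
Proof.
case: l => [[|[|[|[|[|[|l]]]]]] Hl] //; case: m => [[|[|[|[|[|[|m]]]]]] Hm] //;
  rewrite /six_states /= => _; wsimp; move: om2 s3s3; move: omega s3 => w s h1 h2; try ring: h1.
Qed.

Lemma norm1 (l : 'I_6) : inner (six_states l) (six_states l) = 1.
Proof.
case: l => [[|[|[|[|[|[|l]]]]]] Hl] //; rewrite /six_states /=; wsimp;
  move: om2 s3s3; move: omega s3 => w s h1 h2; rewrite -[RHS]h2; ring: h1.
Qed.

Lemma contra4 {X Y a b c d : algC} : X = a * b -> Y = c * d -> 0 = a * d ->
  X != 0 -> Y != 0 -> False.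
Proof.
move=> -> -> /eqP; rewrite eq_sym mulf_eq0 => /orP[]/eqP->;
  by rewrite ?mul0r ?mulr0 eqxx.
Qed.

Lemma ge_Wt c1 c2 c3 : c1 != 0 -> c2 != 0 -> c3 != 0 ->
  genuinely_entangled (Wtype c1 c2 c3).
Proof.
move=> h1 h2 h3.
have n1 : s3 * c1 != 0 by rewrite mulf_neq0 ?s3n0.
have n2 : s3 * c2 != 0 by rewrite mulf_neq0 ?s3n0.
have n3 : s3 * c3 != 0 by rewrite mulf_neq0 ?s3n0.
split.
- by exists i0, i0, i1; rewrite /Wtype /ket; kev.
- move=> [a [p h]]; move: (h i0 i0 i1) (h i1 i0 i0) (h i0 i0 i0);
  rewrite /Wtype /ket; kev => e1 e2 e3; by apply: (contra4 e1 e2 e3).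
- move=> [a [p h]]; move: (h i0 i1 i0) (h i0 i0 i1) (h i0 i1 i1);
  rewrite /Wtype /ket; kev => e1 e2 e3; by apply: (contra4 e1 e2 e3).
- move=> [a [p h]]; move: (h i0 i1 i0) (h i0 i0 i1) (h i0 i0 i0);
  rewrite /Wtype /ket; kev => e1 e2 e3; by apply: (contra4 e1 e2 e3).
Qed.

Lemma ge_Wt' c1 c2 c3 : c1 != 0 -> c2 != 0 -> c3 != 0 ->
  genuinely_entangled (Wtype' c1 c2 c3).
Proof.
move=> h1 h2 h3.
have n1 : s3 * c1 != 0 by rewrite mulf_neq0 ?s3n0.
have n2 : s3 * c2 != 0 by rewrite mulf_neq0 ?s3n0.
have n3 : s3 * c3 != 0 by rewrite mulf_neq0 ?s3n0.
split.
- by exists i0, i0, i0; rewrite /Wtype' /ket; kev.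
- move=> [a [p h]]; move: (h i0 i0 i0) (h i1 i0 i1) (h i0 i0 i1);
  rewrite /Wtype' /ket; kev => e1 e2 e3; by apply: (contra4 e1 e2 e3).
- move=> [a [p h]]; move: (h i1 i1 i0) (h i0 i0 i0) (h i0 i1 i0);
  rewrite /Wtype' /ket; kev => e1 e2 e3; by apply: (contra4 e1 e2 e3).
- move=> [a [p h]]; move: (h i1 i0 i1) (h i0 i0 i0) (h i0 i0 i1);
  rewrite /Wtype' /ket; kev => e1 e2 e3; by apply: (contra4 e1 e2 e3).
Qed.

Lemma om2_n0 : omega ^+ 2 != 0.
Proof. by rewrite expf_neq0 // om_n0. Qed.

Lemma gen_ent (l : 'I_6) : genuinely_entangled (six_states l).
Proof.
have o1 := oner_neq0 algC; have o2 := om_n0; have o3 := om2_n0.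
case: l => [[|[|[|[|[|[|l]]]]]] Hl] //; rewrite /six_states /=;
  by [apply: ge_Wt | apply: ge_Wt'].
Qed.

Lemma local_exp A B C v i j k : local_op A B C v i j k =
  A i i0 * B j i0 * C k i0 * v i0 i0 i0 + A i i0 * B j i0 * C k i1 * v i0 i0 i1 +
  A i i0 * B j i1 * C k i0 * v i0 i1 i0 + A i i0 * B j i1 * C k i1 * v i0 i1 i1 +
  A i i1 * B j i0 * C k i0 * v i1 i0 i0 + A i i1 * B j i0 * C k i1 * v i1 i0 i1 +
  A i i1 * B j i1 * C k i0 * v i1 i1 i0 + A i i1 * B j i1 * C k i1 * v i1 i1 i1.
Proof. rewrite /local_op !sum2; ring. Qed.

Definition Dg (x : algC) : 'M[algC]_2 :=
  \matrix_(i, j) (if i == j then (if val i == 0%N then 1 else x) else 0).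
Definition Fl : 'M[algC]_2 := \matrix_(i, j) (if i == j then 0 else 1).

Lemma Dg_unit x : x != 0 -> Dg x \in unitmx.
Proof.
move=> hx; have [] := @mulmx1_unit _ _ (Dg x) (Dg x^-1) => //.
apply/matrixP => i j; rewrite !mxE sum2 !mxE.
by case: (I2P i) => ->; case: (I2P j) => ->; kev; rewrite ?mulfV.
Qed.

Lemma Fl_unit : Fl \in unitmx.
Proof.
have [] := @mulmx1_unit _ _ Fl Fl => //.
apply/matrixP => i j; rewrite !mxE sum2 !mxE.
by case: (I2P i) => ->; case: (I2P j) => ->; kev.
Qed.

Lemma Wc_Wt c1 c2 c3 : c1 != 0 -> c2 != 0 -> c3 != 0 -> W_class (Wtype c1 c2 c3).
Proof.
move=> h1 h2 h3; exists (Dg c3), (Dg c2), (Dg c1), 1; split;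
  rewrite ?Dg_unit ?oner_neq0 // => i j k.
rewrite local_exp /W_state /Wtype /Dg !mxE.
by case: (I2P i) => ->; case: (I2P j) => ->; case: (I2P k) => ->; rewrite /ket; kev; try ring.
Qed.

Lemma Wc_Wt' c2 c3 : c2 != 0 -> c3 != 0 -> W_class (Wtype' 1 c2 c3).
Proof.
move=> h2 h3; exists Fl, (Dg c3), (Dg c2), 1; split;
  rewrite ?Dg_unit ?Fl_unit ?oner_neq0 // => i j k.
rewrite local_exp /W_state /Wtype' /Dg /Fl !mxE.
by case: (I2P i) => ->; case: (I2P j) => ->; case: (I2P k) => ->; rewrite /ket; kev; try ring.
Qed.

Lemma wclass (l : 'I_6) : W_class (six_states l).
Proof.
have o1 := oner_neq0 algC; have o2 := om_n0; have o3 := om2_n0.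
case: l => [[|[|[|[|[|[|l]]]]]] Hl] //; rewrite /six_states /=;
  by [apply: Wc_Wt | apply: Wc_Wt'].
Qed.

Lemma solve3 (w x y z : algC) : w ^+ 2 = - w - 1 -> 1*x + 1*y + 1*z = 0 -> 1*x + w^+2*y + w*z = 0 -> 1*x+w*y+w^+2*z = 0 -> [/\ x = 0, y = 0 & z = 0].
Proof.
move=> h e0 e1 e2.
have n3 : 3 != 0 :> algC by rewrite pnatr_eq0.
have ex : 3 * x = (1*x + 1*y + 1*z) + (1*x + w^+2*y + w*z) + (1*x+w*y+w^+2*z) by ring: h.
have ey : 3 * y = (1*x + 1*y + 1*z) + w * (1*x + w^+2*y + w*z) + w^+2 * (1*x+w*y+w^+2*z) by ring: h.
have ez : 3 * z = (1*x + 1*y + 1*z) + w^+2 * (1*x + w^+2*y + w*z) + w * (1*x+w*y+w^+2*z) by ring: h.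
rewrite e0 e1 e2 !mulr0 !addr0 in ex ey ez.
have c : forall t : algC, 3 * t = 0 -> t = 0.
  by move=> t /eqP; rewrite mulf_eq0 (negPf n3) => /eqP.
by split; apply: c.
Qed.

Lemma cancel_s3 (t : algC) : s3^* * t = 0 -> t = 0.
Proof. by move/eqP; rewrite mulf_eq0 s3c (negPf s3n0) => /eqP. Qed.

Lemma compl_zero v : in_complement six_states v ->
  [/\ v i0 i0 i1 = 0, v i0 i1 i0 = 0, v i1 i0 i0 = 0 &
      [/\ v i0 i0 i0 = 0, v i1 i0 i1 = 0 & v i1 i1 i0 = 0]].
Proof.
move=> H.
have e0 := H (@Ordinal 6 0 isT); have e1 := H (@Ordinal 6 1 isT);
have e2 := H (@Ordinal 6 2 isT); have e3 := H (@Ordinal 6 3 isT);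
have e4 := H (@Ordinal 6 4 isT); have e5 := H (@Ordinal 6 5 isT).
rewrite /six_states /= ?inner_Wt ?inner_Wt' ?conjC1 ?om_c ?om2c in e0 e1 e2 e3 e4 e5.
move/cancel_s3: e0 => e0; move/cancel_s3: e1 => e1; move/cancel_s3: e2 => e2.
move/cancel_s3: e3 => e3; move/cancel_s3: e4 => e4; move/cancel_s3: e5 => e5.
have [-> -> ->] := @solve3 _ _ _ _ om2 e0 e1 e2.
have [-> -> ->] := @solve3 _ _ _ _ om2 e3 e4 e5.
by [].
Qed.

Lemma compl_form v : in_complement six_states v -> forall i j k,
  v i j k = v i i1 i1 * ((j == i1) && (k == i1))%:R.
Proof.
move=> /compl_zero [z1 z2 z3 [z4 z5 z6]] i j k.
by case: (I2P i) => ->; case: (I2P j) => ->; case: (I2P k) => ->;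
  rewrite ?z1 ?z2 ?z3 ?z4 ?z5 ?z6; kev.
Qed.

Lemma compl_prod v : in_complement six_states v ->
  [/\ fully_product v, product_A_BC v, product_B_AC v & product_C_AB v].
Proof.
move=> H; have F := @compl_form v H.
split.
- exists (fun i => v i i1 i1), (fun j => (j == i1)%:R), (fun k => (k == i1)%:R) => i j k.
  by rewrite F; case: (I2P j) => ->; case: (I2P k) => ->; kev.
- exists (fun i => v i i1 i1), (fun j k => ((j == i1) && (k == i1))%:R) => i j k.
  exact: F.
- exists (fun j => (j == i1)%:R), (fun i k => v i i1 i1 * (k == i1)%:R) => i j k.
  by rewrite F; case: (I2P j) => ->; case: (I2P k) => ->; kev.
- exists (fun k => (k == i1)%:R), (fun i j => v i i1 i1 * (j == i1)%:R) => i j k.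
  by rewrite F; case: (I2P j) => ->; case: (I2P k) => ->; kev.
Qed.

Lemma ket011_compl : in_complement six_states (ket 0 1 1).
Proof.
move=> l; case: l => [[|[|[|[|[|[|l]]]]]] Hl] //; rewrite /six_states /=;
  rewrite ?inner_Wt ?inner_Wt' /ket; kev; by [].
Qed.

Theorem theorem1 :
  [/\ forall l m : 'I_6, l != m -> inner (six_states l) (six_states m) = 0,
      forall l, genuinely_entangled (six_states l),
      forall l, W_class (six_states l),
      unextendible_entangled_basis six_states
    & forall v, nonzero_state v -> in_complement six_states v ->
        [/\ product_A_BC v, product_B_AC v & product_C_AB v]].
Proof.
split.
- exact: orth.
- exact: gen_ent.
- exact: wclass.
- split.
  + exact: norm1.
  + exact: orth.
  + move=> l; have [nz nA _ _] := gen_ent l; split => // -[a [b [c h]]].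
    apply: nA; exists a, (fun j k => b j * c k) => i j k; by rewrite h mulrA.
  + exists (ket 0 1 1); split; last exact: ket011_compl.
    by exists i0, i1, i1; rewrite /ket; kev; rewrite oner_neq0.
  + by move=> v /compl_prod [fp _ _ _] [_ []].
- by move=> v _ /compl_prod [].
Qed.
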